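(* Let $S$ be an $E$-solid locally inverse semigroup, $\rho$ an inverse semigroup congruence on $S$ whose idempotent classes are completely simple subsemigroups, $T=S/\rho$, and $\mathcal C$ the derived semigroupoid. For an arrow $a$ of $\mathcal C$ let $\widehat a$ denote the unique stable arrow $b$ with $b\le a$. Then for any arrows $a,b$ of $\mathcal C$ with $\omega(a)=\alpha(b)$: (1) $\widehat{\widehat a}=\widehat a$; (2) $\widehat{a\circ b}=\widehat a\circ\widehat b$; (3) $\widehat{(b\curlywedge a)}=(\widehat b\curlywedge\widehat a)$.
   Context: The derived semigroupoid $\mathcal C$ has object set $T$ and arrows $\mathcal C(\alpha,\beta)=\{(\alpha,s,\beta)\in T\times S\times T:\alpha\cdot s\rho=\beta,\ \beta\cdot(s\rho)^{-1}=\alpha\}$; for $a=(\alpha,s,\beta)$, $\alpha(a)=\alpha$, $\omega(a)=\beta$; composition $(\alpha,s,\beta)\circ(\beta,t,\gamma)=(\alpha,st,\gamma)$. An arrow $(\alpha,s,\beta)$ is stable if $s\rho=\alpha^{-1}\beta$. Natural partial order on $\mathcal C$: $(\alpha,s,\beta)\le(\gamma,t,\delta)$ iff $\alpha=\gamma$, $\beta=\delta$ and $s\le t$ in the natural partial order of $S$ (it is known that each arrow $a$ has a unique stable $b\le a$). Inverses of $(\alpha,s,\beta)$ are $(\beta,s^*,\alpha)$ with $s^*$ an inverse of $s$ in $S$. Each loop semigroup $\mathcal C(\gamma,\gamma)$ is locally inverse, so sandwich sets $S(e,f)=\{g\text{ idempotent}: g\circ e=g=f\circ g,\ e\circ g\circ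 f=e\circ f\}$ are singletons; for arrows $b,a$ with $\alpha(b)=\omega(a)$, $(b\curlywedge a)$ is the unique element of $S(a'\circ a,\ b\circ b')$ for any inverses $a',b'$ of $a,b$. Locally inverse: regular with every $eSe$ inverse; $E$-solid: idempotent-generated subsemigroup completely regular. *)

(* Defs.v *)
From Stdlib Require Import Classical.

Set Implicit Arguments.

Record semigroup := Semigroup {
  car :> Type;
  op : car -> car -> car;
  opA : forall x y z, op x (op y z) = op (op x y) z }.

Arguments op {s} _ _.

Section SemigroupDefs.
Variable S : semigroup.

Definition idem (e : S) : Prop := op e e = e.

Definition inverse_of (x y : S) : Prop := op (op x y) x = x /\ op (op y x) y = y.

Definition regular : Prop := forall x : S, exists y, inverse_of x y.

Definition inverse_on (P : S -> Prop) : Prop :=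
  forall x, P x -> exists! y, P y /\ inverse_of x y.

Definition inverse_semigroup : Prop := inverse_on (fun _ => True).

Definition local_sub (e : S) (x : S) : Prop := exists s, x = op (op e s) e.

Definition locally_inverse : Prop :=
  regular /\ forall e, idem e -> inverse_on (local_sub e).

Inductive idem_gen : S -> Prop :=
| ig_idem e : idem e -> idem_gen e
| ig_mul x y : idem_gen x -> idem_gen y -> idem_gen (op x y).

Definition completely_regular_on (P : S -> Prop) : Prop :=
  forall a, P a -> exists x, P x /\ inverse_of a x /\ op a x = op x a.

Definition E_solid : Prop := completely_regular_on idem_gen.

Definition nat_le (s t : S) : Prop :=
  exists e f, idem e /\ idem f /\ s = op e t /\ s = op t f.

Definition subsemigroup (P : S -> Prop) : Prop :=
  forall x y, P x -> P y -> P (op x y).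

(** simple: any two elements generate the same two-sided ideal within P *)
Definition simple_on (P : S -> Prop) : Prop :=
  forall a b, P a -> P b ->
    b = a \/ (exists x, P x /\ b = op x a) \/ (exists y, P y /\ b = op a y)
    \/ (exists x y, P x /\ P y /\ b = op (op x a) y).

Definition primitive_on (P : S -> Prop) (f : S) : Prop :=
  P f /\ idem f /\
  forall g, P g -> idem g -> op g f = g -> op f g = g -> g = f.

Definition completely_simple_on (P : S -> Prop) : Prop :=
  subsemigroup P /\ simple_on P /\ exists f, primitive_on P f.

End SemigroupDefs.

Definition homomorphism (S T : semigroup) (phi : S -> T) : Prop :=
  forall x y, phi (op x y) = op (phi x) (phi y).

Definition surjective (S T : semigroup) (phi : S -> T) : Prop :=
  forall t, exists s, phi s = t.

Record arrow (S T : Type) := Arr { src : T; lab : S; tgt : T }.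

Section Derived.
Variables (S T : semigroup) (phi : S -> T) (Tinv : T -> T).

Definition is_arrow (a : arrow S T) : Prop :=
  op (src a) (phi (lab a)) = tgt a /\ op (tgt a) (Tinv (phi (lab a))) = src a.

Definition comp (a b : arrow S T) : arrow S T :=
  Arr (src a) (op (lab a) (lab b)) (tgt b).

Definition stable (a : arrow S T) : Prop :=
  phi (lab a) = op (Tinv (src a)) (tgt a).

Definition arr_le (a b : arrow S T) : Prop :=
  src a = src b /\ tgt a = tgt b /\ @nat_le S (lab a) (lab b).

Definition is_hat (h a : arrow S T) : Prop :=
  is_arrow h /\ stable h /\ arr_le h a.

Definition arr_inverse (a a' : arrow S T) : Prop :=
  src a' = tgt a /\ tgt a' = src a /\ @inverse_of S (lab a) (lab a').

(** sandwich set S(e,f) in the loop semigroup C(gamma,gamma) *)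
Definition loop (gamma : T) (x : arrow S T) : Prop :=
  is_arrow x /\ src x = gamma /\ tgt x = gamma.

Definition in_sandwich (gamma : T) (e f g : arrow S T) : Prop :=
  loop gamma g /\ comp g g = g /\ comp g e = g /\ comp f g = g /\
  comp (comp e g) f = comp e f.

(** [w] = (b ⋏ a), for alpha(b) = omega(a) = gamma: the element of
    S(a' o a, b o b') for inverses a', b' of a, b *)
Definition is_wedge (w b a : arrow S T) : Prop :=
  exists a' b', is_arrow a' /\ is_arrow b' /\ arr_inverse a a' /\ arr_inverse b b' /\
    in_sandwich (tgt a) (comp a' a) (comp b b') w.

End Derived.

Arguments homomorphism {S T} phi.
Arguments surjective {S T} phi.
Arguments is_arrow {S T} phi Tinv a.
Arguments stable {S T} phi Tinv a.
Arguments is_hat {S T} phi Tinv h a.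
Arguments is_wedge {S T} phi Tinv w b a.
Arguments comp {S T} a b.
Arguments inverse_of {S} x y.
Arguments idem {S} e.
Arguments completely_simple_on {S} P.

(* Main.v *)
Require Import Defs.
From Stdlib Require Import Setoid.
Set Implicit Arguments.

Ltac sa := repeat rewrite opA; reflexivity.

Ltac rwl H :=
  let H' := fresh "HL" in
  match type of H with ?L = ?R =>
    assert (H' : forall a, op a L = op a R) by (intro; rewrite H; reflexivity);
    repeat setoid_rewrite opA in H';
    first [rewrite H | rewrite H']; clear H' end.

Ltac rwr H := let H2 := fresh "HR" in pose proof (eq_sym H) as H2; rwl H2; clear H2.
Ltac nrm := repeat rewrite opA.
Ltac nrmH H := repeat rewrite opA in H.

Section Semi.
Variable S : semigroup.
Local Infix "⋆" := (@op S) (at level 40, left associativity).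
Local Notation nle := (@nat_le S).

Lemma inv_sym (x y : S) : inverse_of x y -> inverse_of y x.
Proof. intros [H1 H2]; split; assumption. Qed.

Lemma idem_prod_in (P : S -> Prop) (Pc : forall x y, P x -> P y -> P (x⋆y))
  (HI : @inverse_on S P) g h : P g -> P h -> idem g -> idem h -> idem (g⋆h).
Proof.
  intros Pg Ph Ig Ih. unfold idem in *.
  destruct (HI (g⋆h) (Pc _ _ Pg Ph)) as [x [[Px [H1 H2]] U]].
  nrmH H1. nrmH H2.
  assert (Ex : x = h⋆x⋆g).
  { apply U. split. apply Pc; [apply Pc|]; auto. split.
    - nrm. rwl Ih. rwl Ig. rwl H1. reflexivity.
    - nrm. rwl Ig. rwl Ih. rwl H2. reflexivity. }
  assert (Exg : x ⋆ g = x).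
  { rewrite Ex at 1. rwl Ig. symmetry; exact Ex. }
  assert (Ehx : h ⋆ x = x).
  { rewrite Ex at 1. nrm. rwl Ih. symmetry; exact Ex. }
  assert (Ixx : x ⋆ x = x).
  { transitivity (x⋆g⋆(h⋆x)). rewrite Ehx, Exg; reflexivity. nrm; exact H2. }
  destruct (HI x Px) as [y [_ Uy]].
  assert (E1 : y = g ⋆ h).
  { apply Uy. split. apply Pc; auto. apply inv_sym. split; nrm; assumption. }
  assert (E2 : y = x).
  { apply Uy. split. auto. split; rewrite ?Ixx; auto. }
  rewrite <- E1, E2. exact Ixx.
Qed.

Lemma comm_in (P : S -> Prop) (Pc : forall x y, P x -> P y -> P (x⋆y))
  (HI : @inverse_on S P) g h : P g -> P h -> idem g -> idem h -> g⋆h = h⋆g.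
Proof.
  intros Pg Ph Ig Ih.
  pose proof (idem_prod_in Pc HI Pg Ph Ig Ih) as Igh.
  pose proof (idem_prod_in Pc HI Ph Pg Ih Ig) as Ihg.
  unfold idem in *.
  destruct (HI (g⋆h) (Pc _ _ Pg Ph)) as [y [_ Uy]].
  assert (E1 : y = g⋆h).
  { apply Uy. split. apply Pc; auto. split; rewrite ?Igh; auto. }
  assert (E2 : y = h⋆g).
  { apply Uy. split. apply Pc; auto. split.
    - nrm. rwl Ih. rwl Ig. nrmH Igh. rwl Igh. reflexivity.
    - nrm. rwl Ig. rwl Ih. nrmH Ihg. rwl Ihg. reflexivity. }
  congruence.
Qed.


Lemma comm_loc (HSli : locally_inverse S) (e g h : S) : idem e -> idem g -> idem h ->
  e⋆g = g -> g⋆e = g -> e⋆h = h -> h⋆e = h -> g⋆h = h⋆g.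
Proof.
  intros Ie Ig Ih H1 H2 H3 H4.
  apply (comm_in (P := @local_sub S e)).
  - intros x y [a ->] [b ->]. exists (a⋆e⋆e⋆b). sa.
  - exact (proj2 HSli e Ie).
  - exists g. rewrite H1, H2. reflexivity.
  - exists h. rewrite H3, H4. reflexivity.
  - exact Ig.
  - exact Ih.
Qed.

Lemma KS (y x x' : S) : nle y x -> inverse_of x x' ->
  y⋆x'⋆x = y /\ x⋆x'⋆y = y /\ y⋆x'⋆y = y.
Proof.
  intros [e [f [Ie [If [Hy1 Hy2]]]]] [Hx1 Hx2]. unfold idem in *.
  split; [|split].
  - rewrite Hy1. nrm. rwl Hx1. reflexivity.
  - rewrite Hy2. nrm. rwl Hx1. reflexivity.
  - rewrite Hy1 at 1. rewrite Hy2 at 1. nrm. rwl Hx1. rewrite <- Hy1. rewrite Hy2. rwl If. reflexivity.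
Qed.

Lemma nat_le_refl (Hreg : regular S) (x : S) : nle x x.
Proof.
  destruct (Hreg x) as [x' [H1 H2]]. exists (x⋆x'), (x'⋆x).
  split; [|split; [|split]]; unfold idem.
  - nrm. rwl H1. reflexivity.
  - nrm. rwl H1. reflexivity.
  - rewrite H1. reflexivity.
  - nrm. rewrite H1. reflexivity.
Qed.

Lemma nat_le_idem (v w : S) : idem v -> w⋆v = v -> v⋆w = v -> nle v w.
Proof. intros Iv H1 H2. exists v, v. repeat split; auto. Qed.

Lemma nat_le_trans (Hreg : regular S) (y x z : S) : nle y x -> nle x z -> nle y z.
Proof.
  intros Hyx Hxz.
  destruct (Hreg x) as [x' Hx']. destruct (Hreg z) as [z' Hz'].
  destruct (KS Hyx Hx') as [A1 [A2 A3]].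
  destruct (KS Hxz Hz') as [B1 [B2 B3]].
  destruct Hx' as [Hx1 Hx2].
  assert (C1 : y⋆z'⋆z = y).
  { rewrite <- A1 at 1. nrm. rwl B1. exact A1. }
  assert (C2 : z⋆z'⋆y = y).
  { rewrite <- A2 at 1. nrm. rwl B2. exact A2. }
  assert (C3 : y⋆z'⋆y = y).
  { rewrite <- A1 at 1. rewrite <- A2 at 2. nrm. rwl B3. rwl Hx2. exact A3. }
  exists (y⋆z'), (z'⋆y). unfold idem. split; [|split; [|split]].
  - nrm. rwl C3. reflexivity.
  - nrm. rwl C3. reflexivity.
  - rewrite C1. reflexivity.
  - nrm. rewrite C2. reflexivity.
Qed.

Lemma lemR (x x' k : S) : inverse_of x x' -> idem k -> x⋆x'⋆k = k -> nle (k⋆x) x.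
Proof.
  intros [Hx1 Hx2] Ik H. unfold idem in Ik. exists k, (x'⋆k⋆x).
  split; [|split; [|split]]; unfold idem; auto.
  - nrm. rwl H. rwl Ik. reflexivity.
  - nrm. rwl H. reflexivity.
Qed.

Lemma lemL (x x' k : S) : inverse_of x x' -> idem k -> k⋆x'⋆x = k -> nle (x⋆k) x.
Proof.
  intros [Hx1 Hx2] Ik H. unfold idem in Ik. exists (x⋆k⋆x'), k.
  split; [|split; [|split]]; unfold idem; auto.
  - nrm. rwl H. rwl Ik. reflexivity.
  - nrm. rwl H. reflexivity.
Qed.

Lemma compat_r (HSli : locally_inverse S) (t s u : S) : nle t s -> nle (t⋆u) (s⋆u).
Proof.
  intros Hts. pose proof (proj1 HSli) as Hreg.
  destruct (Hreg s) as [s' Hs']. destruct (KS Hts Hs') as [A1 [A2 A3]].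
  destruct Hs' as [Hs1 Hs2].
  assert (Hex : s⋆s'⋆(s⋆u) = s⋆u) by (nrm; rwl Hs1; reflexivity).
  destruct (Hreg (s⋆u)) as [x' [Hx1 Hx2]].
  set (x := s⋆u) in *. assert (Hxd : x = s⋆u) by reflexivity. clearbody x.
  assert (Ie : idem (s⋆s')) by (unfold idem; nrm; rwl Hs1; reflexivity).
  assert (Ik : idem (t⋆s')) by (unfold idem; nrm; rwl A3; reflexivity).
  assert (Im : idem (x⋆x'⋆(s⋆s'))) by (unfold idem; nrm; rwl Hex; rwl Hx1; reflexivity).
  assert (Hc : (x⋆x'⋆(s⋆s'))⋆(t⋆s') = (t⋆s')⋆(x⋆x'⋆(s⋆s'))).
  { apply (comm_loc HSli Ie Im Ik).
    - nrm. rwl Hex. reflexivity.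
    - nrm. rwl Hs1. reflexivity.
    - nrm. rwl A2. reflexivity.
    - nrm. rwl A1. reflexivity. }
  nrmH Hc. unfold idem in Im, Ik. nrmH Im. nrmH Ik.
  assert (E : (x⋆x'⋆(s⋆s')⋆(t⋆s'))⋆x = t⋆u).
  { nrm. rwl Hc. rwl Hex. rwl Hx1. rewrite Hxd. nrm. rwl A1. reflexivity. }
  rewrite <- E. apply lemR with x'.
  - split; assumption.
  - unfold idem. nrm. rwr Hc. rwl Im. rwl Ik. reflexivity.
  - nrm. rwl Hx1. reflexivity.
Qed.

Lemma compat_l (HSli : locally_inverse S) (t u v : S) : nle u v -> nle (t⋆u) (t⋆v).
Proof.
  intros Huv. pose proof (proj1 HSli) as Hreg.
  destruct (Hreg v) as [v' Hv']. destruct (KS Huv Hv') as [A1 [A2 A3]].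
  destruct Hv' as [Hv1 Hv2].
  assert (Hxe : t⋆v⋆(v'⋆v) = t⋆v) by (nrm; rwl Hv1; reflexivity).
  destruct (Hreg (t⋆v)) as [x' [Hx1 Hx2]].
  set (x := t⋆v) in *. assert (Hxd : x = t⋆v) by reflexivity. clearbody x. nrmH Hxe.
  assert (Ie : idem (v'⋆v)) by (unfold idem; nrm; rwl Hv1; reflexivity).
  assert (Ik : idem (v'⋆u)) by (unfold idem; nrm; rwl A3; reflexivity).
  assert (Im : idem (v'⋆v⋆(x'⋆x))) by (unfold idem; nrm; rwl Hxe; rwl Hx1; reflexivity).
  assert (Hc : (v'⋆u)⋆(v'⋆v⋆(x'⋆x)) = (v'⋆v⋆(x'⋆x))⋆(v'⋆u)).
  { apply (comm_loc HSli Ie Ik Im).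
    - nrm. rwl A2. reflexivity.
    - nrm. rwl A1. reflexivity.
    - nrm. rwl Hv1. reflexivity.
    - nrm. rwl Hxe. reflexivity. }
  nrmH Hc. unfold idem in Im, Ik. nrmH Im. nrmH Ik.
  assert (E : x⋆(v'⋆u⋆(v'⋆v⋆(x'⋆x))) = t⋆u).
  { nrm. rwl Hc. rwl Hxe. rwl Hx1. rewrite Hxd. nrm. rwl A2. reflexivity. }
  rewrite <- E. apply lemL with x'.
  - split; assumption.
  - unfold idem. nrm. rwr Hc. rwl Ik. rwl Im. reflexivity.
  - nrm. rwl Hx2. reflexivity.
Qed.

Lemma compat (HSli : locally_inverse S) (s1 s t1 t : S) :
  nle s1 s -> nle t1 t -> nle (s1⋆t1) (s⋆t).
Proof.
  intros H1 H2. apply nat_le_trans with (s1⋆t). exact (proj1 HSli).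
  apply compat_l; auto. apply compat_r; auto.
Qed.

Definition sw (e f h : S) := idem h /\ h⋆e = h /\ f⋆h = h /\ e⋆h⋆f = e⋆f.

Lemma sw_aux (HSli : locally_inverse S) (e f h1 h2 : S) : idem e -> idem f ->
  sw e f h1 -> sw e f h2 -> h1⋆h2 = h1.
Proof.
  intros Ie If [Ih1 [He1 [Hf1 Hs1]]] [Ih2 [He2 [Hf2 Hs2]]]. unfold idem in *.
  assert (P1 : h1⋆h2⋆h1 = h1).
  { transitivity (h1⋆e⋆h2⋆f⋆h1). symmetry; nrm; rwl He1; rwl Hf1; reflexivity.
    rwl Hs2. rwl He1. rwl Hf1. exact Ih1. }
  assert (Ieh : forall h, h⋆h = h -> h⋆e = h -> idem (e⋆h)).
  { intros h Ih He. unfold idem. nrm. rwl He. rwl Ih. reflexivity. }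
  assert (C : (e⋆h1)⋆(e⋆h2) = (e⋆h2)⋆(e⋆h1)).
  { apply (comm_loc HSli Ie (Ieh _ Ih1 He1) (Ieh _ Ih2 He2)).
    - nrm. rwl Ie. reflexivity.
    - nrm. rwl He1. reflexivity.
    - nrm. rwl Ie. reflexivity.
    - nrm. rwl He2. reflexivity. }
  nrmH C.
  assert (C' : e⋆h1⋆h2 = e⋆h2⋆h1).
  { transitivity (e⋆h1⋆e⋆h2). symmetry; rwl He1; reflexivity.
    rewrite C. rwl He2. reflexivity. }
  transitivity (h1⋆e⋆h1⋆h2). rwl He1. rwl Ih1. reflexivity.
  rwl C'. rwl He1. exact P1.
Qed.

Lemma sw_unique (HSli : locally_inverse S) (e f h1 h2 : S) : idem e -> idem f ->
  sw e f h1 -> sw e f h2 -> h1 = h2.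
Proof.
  intros Ie If H1 H2.
  pose proof (sw_aux HSli Ie If H1 H2) as A12.
  pose proof (sw_aux HSli Ie If H2 H1) as A21.
  destruct H1 as [Ih1 [He1 [Hf1 Hs1]]]. destruct H2 as [Ih2 [He2 [Hf2 Hs2]]].
  unfold idem in *.
  assert (Ihf : forall h, h⋆h = h -> f⋆h = h -> idem (h⋆f)).
  { intros h Ih Hf. unfold idem. nrm. rwl Hf. rwl Ih. reflexivity. }
  assert (C : (h1⋆f)⋆(h2⋆f) = (h2⋆f)⋆(h1⋆f)).
  { apply (comm_loc HSli If (Ihf _ Ih1 Hf1) (Ihf _ Ih2 Hf2)).
    - nrm. rewrite Hf1. reflexivity.
    - nrm. rwl If. reflexivity.
    - nrm. rewrite Hf2. reflexivity.
    - nrm. rwl If. reflexivity. }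
  nrmH C.
  assert (D : h1⋆f = h2⋆f).
  { transitivity (h1⋆f⋆h2⋆f). rwl Hf2. rewrite A12. reflexivity.
    rewrite C. rwl Hf1. rewrite A21. reflexivity. }
  rewrite <- A12. rewrite <- Hf2 at 1. nrm. rewrite D. rwl Hf2. exact Ih2.
Qed.

Lemma cs_prim (P : S -> Prop) (Hcs : completely_simple_on P) (g e : S) :
  P g -> P e -> idem g -> idem e -> g⋆e = g -> e⋆g = g -> g = e.
Proof.
  intros Pg Pe Ig Ie Hge Heg.
  destruct Hcs as [Hsub [Hsimp [f [Pf [If Hprim]]]]].
  unfold idem in *.
  assert (Hxy : exists x y, P x /\ P y /\ e = x⋆f⋆y).
  { destruct (Hsimp f e Pf Pe) as [E|[[x [Px E]]|[[y [Py E]]|[x [y [Px [Py E]]]]]]].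
    - exists f, f. subst e. split; auto. split; auto. rewrite !If. reflexivity.
    - exists x, e. split; auto. split; auto. transitivity (e⋆e). symmetry; exact Ie.
      rewrite E at 1. reflexivity.
    - exists e, y. split; auto. split; auto. transitivity (e⋆e). symmetry; exact Ie.
      rewrite E at 2. sa.
    - exists x, y. auto. }
  destruct Hxy as [x [y [Px [Py E]]]].
  assert (HYX : f⋆y⋆e⋆(e⋆x⋆f) = f).
  { apply Hprim.
    - repeat apply Hsub; auto.
    - unfold idem. nrm. repeat (rwl Ie || rwl If || rwr E). reflexivity.
    - nrm. rwl If. reflexivity.
    - nrm. rewrite If. reflexivity. }
  assert (HYgX : f⋆y⋆e⋆g⋆(e⋆x⋆f) = f).
  { apply Hprim.
    - repeat apply Hsub; auto.
    - unfold idem. nrm. repeat (rwl Ie || rwl If || rwr E || rwl Hge || rwl Heg || rwl Ig). reflexivity.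
    - nrm. rwl If. reflexivity.
    - nrm. rewrite If. reflexivity. }
  transitivity ((e⋆x⋆f)⋆(f⋆y⋆e⋆g⋆(e⋆x⋆f))⋆(f⋆y⋆e)).
  - nrm. repeat (rwl Ie || rwl If || rwr E || rwl Hge || rwl Heg || rwl Ig). reflexivity.
  - rewrite HYgX. nrm. repeat (rwl Ie || rwl If || rwr E). reflexivity.
Qed.

End Semi.

Section TSemi.
Variables (T : semigroup) (Tinv : T -> T).
Hypotheses (HTinv : inverse_semigroup T) (HTinvx : forall x : T, inverse_of x (Tinv x)).
Local Infix "⊙" := (@op T) (at level 40, left associativity).

Lemma T_uniq (x y : T) : inverse_of x y -> y = Tinv x.
Proof.
  intros H. pose proof HTinv as HT. unfold inverse_semigroup, inverse_on in HT. destruct (HT x I) as [z [_ U]].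
  rewrite <- (U y (conj I H)). apply U. split; auto.
Qed.

Lemma T_comm (e f : T) : idem e -> idem f -> e ⊙ f = f ⊙ e.
Proof.
  intros. apply (comm_in (P := fun _ : T => True)); auto.
Qed.

Lemma T_invinv (x : T) : Tinv (Tinv x) = x.
Proof. symmetry. apply T_uniq. apply inv_sym. apply HTinvx. Qed.

Lemma T_idem1 (x : T) : idem (Tinv x ⊙ x).
Proof. destruct (HTinvx x) as [H1 H2]. unfold idem. nrm. rwl H2. reflexivity. Qed.

Lemma T_idem2 (x : T) : idem (x ⊙ Tinv x).
Proof. destruct (HTinvx x) as [H1 H2]. unfold idem. nrm. rwl H1. reflexivity. Qed.

Lemma T_invmul (x y : T) : Tinv (x ⊙ y) = Tinv y ⊙ Tinv x.
Proof.
  symmetry. apply T_uniq.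
  destruct (HTinvx x) as [Hx1 Hx2]. destruct (HTinvx y) as [Hy1 Hy2].
  pose proof (T_comm (T_idem2 y) (T_idem1 x)) as C. nrmH C.
  split.
  - nrm. rwl C. rwl Hx1. rwl Hy1. reflexivity.
  - nrm. rwr C. rwl Hy2. rwl Hx2. reflexivity.
Qed.
End TSemi.

Section Main.
Variables (S T : semigroup) (phi : S -> T) (Tinv : T -> T).
Hypotheses (HSli : locally_inverse S) (Hhom : homomorphism phi)
  (HTinv : inverse_semigroup T) (HTinvx : forall x : T, inverse_of x (Tinv x))
  (Hcs : forall e : T, idem e -> completely_simple_on (fun s : S => phi s = e)).
Local Infix "⋆" := (@op S) (at level 40, left associativity).
Local Notation nle := (@nat_le S).

Lemma ibu (e u1 u2 : S) : idem e -> idem u1 -> idem u2 -> u1⋆e = u1 -> e⋆u1 = u1 ->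
  u2⋆e = u2 -> e⋆u2 = u2 -> phi u1 = phi u2 -> u1 = u2.
Proof.
  intros Ie I1 I2 H1 H2 H3 H4 Hp.
  pose proof (comm_loc HSli Ie I1 I2 H2 H1 H4 H3) as C.
  unfold idem in I1, I2.
  assert (IE : idem (phi u1)) by (unfold idem; rewrite <- Hhom, I1; reflexivity).
  pose proof (Hcs IE) as HC.
  assert (A : u1⋆u2 = u1).
  { apply (cs_prim HC); cbv beta.
    - rewrite Hhom, <- Hp. exact IE.
    - reflexivity.
    - unfold idem. transitivity (u1⋆(u2⋆u1)⋆u2). sa. rewrite <- C. nrm. rwl I1. rwl I2. reflexivity.
    - exact I1.
    - transitivity (u1⋆(u2⋆u1)). sa. rewrite <- C. nrm. rwl I1. reflexivity.
    - nrm. rwl I1. reflexivity. }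
  assert (B : u2⋆u1 = u2).
  { apply (cs_prim HC); cbv beta.
    - rewrite Hhom, <- Hp. exact IE.
    - symmetry; exact Hp.
    - unfold idem. transitivity (u2⋆(u1⋆u2)⋆u1). sa. rewrite C. nrm. rwl I2. rwl I1. reflexivity.
    - exact I2.
    - transitivity (u2⋆(u1⋆u2)). sa. rewrite C. nrm. rwl I2. reflexivity.
    - nrm. rwl I2. reflexivity. }
  rewrite <- A. rewrite C. exact B.
Qed.

Lemma Uprime (t1 t2 s : S) : nle t1 s -> nle t2 s -> phi t1 = phi t2 -> t1 = t2.
Proof.
  intros H1 H2 Hp.
  destruct (proj1 HSli s) as [s' Hs'].
  destruct (KS H1 Hs') as [A1 [A2 A3]]. destruct (KS H2 Hs') as [B1 [B2 B3]].
  destruct Hs' as [Hs1 Hs2].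
  assert (E : t1⋆s' = t2⋆s').
  { apply (ibu (e := s⋆s')); unfold idem.
    - nrm. rwl Hs1. reflexivity.
    - nrm. rwl A3. reflexivity.
    - nrm. rwl B3. reflexivity.
    - nrm. rwl A1. reflexivity.
    - nrm. rwl A2. reflexivity.
    - nrm. rwl B1. reflexivity.
    - nrm. rwl B2. reflexivity.
    - rewrite !Hhom, Hp. reflexivity. }
  transitivity (t1⋆s'⋆s). symmetry; exact A1.
  rewrite E. exact B1.
Qed.

Lemma hom_inv (s s' : S) : inverse_of s s' -> phi s' = Tinv (phi s).
Proof.
  intros [H1 H2]. apply (@T_uniq T Tinv HTinv HTinvx).
  split; rewrite <- !Hhom; f_equal; assumption.
Qed.

Lemma hat_unique (h1 h2 a : arrow S T) :
  is_hat phi Tinv h1 a -> is_hat phi Tinv h2 a -> h1 = h2.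
Proof.
  destruct h1 as [a1 l1 b1], h2 as [a2 l2 b2], a as [a0 l0 b0].
  intros [_ [St1 [Hs1 [Ht1 Hl1]]]] [_ [St2 [Hs2 [Ht2 Hl2]]]].
  unfold stable in *; simpl in *. subst.
  f_equal. apply (Uprime Hl1 Hl2). congruence.
Qed.
End Main.

Section Key.
Variable S : semigroup.
Hypothesis HSli : locally_inverse S.
Local Infix "⋆" := (@op S) (at level 40, left associativity).
Local Notation nle := (@nat_le S).

Lemma key (s s' s1 s1s t t' t1 t1s wl vl : S) :
  inverse_of s s' -> inverse_of t t' -> inverse_of s1 s1s -> inverse_of t1 t1s ->
  nle s1 s -> nle t1 t ->
  wl⋆wl = wl -> wl⋆(s'⋆s) = wl -> (t⋆t')⋆wl = wl -> (s'⋆s)⋆wl⋆(t⋆t') = (s'⋆s)⋆(t⋆t') ->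
  vl⋆vl = vl -> vl⋆(s1s⋆s1) = vl -> (t1⋆t1s)⋆vl = vl ->
  (s1s⋆s1)⋆vl⋆(t1⋆t1s) = (s1s⋆s1)⋆(t1⋆t1s) ->
  nle vl wl.
Proof.
  intros Is It Is1 It1 Le1 Le2 Hw1 Hw2 Hw3 Hw4 Hv1 Hv2 Hv3 Hv4.
  destruct (KS Le1 Is) as [A1 [A2 A3]]. destruct (KS Le2 It) as [B1 [B2 B3]].
  destruct Is as [Hs1 Hs2]. destruct It as [Ht1 Ht2].
  destruct Is1 as [Hs11 Hs12]. destruct It1 as [Ht11 Ht12].
  nrmH Hw2. nrmH Hw3. nrmH Hw4. nrmH Hv2. nrmH Hv3. nrmH Hv4.
  assert (Iz : idem (s'⋆s)) by (unfold idem; nrm; rwl Hs2; reflexivity).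
  assert (Iz1 : idem (s'⋆s1)) by (unfold idem; nrm; rwl A3; reflexivity).
  assert (Iq : idem (t⋆t')) by (unfold idem; nrm; rwl Ht1; reflexivity).
  assert (Iq1 : idem (t1⋆t')) by (unfold idem; nrm; rwl B3; reflexivity).
  assert (C1 : (s'⋆s⋆wl)⋆(s'⋆s1) = (s'⋆s1)⋆(s'⋆s⋆wl)).
  { apply (comm_loc HSli Iz); unfold idem.
    - nrm. rwl Hw2. rwl Hw1. reflexivity.
    - exact Iz1.
    - nrm. rwl Hs2. reflexivity.
    - nrm. rwl Hw2. reflexivity.
    - nrm. rwl Hs2. reflexivity.
    - nrm. rwl A1. reflexivity. }
  nrmH C1.
  assert (C1' : s'⋆s⋆wl⋆s'⋆s1 = s'⋆s1⋆wl) by (rewrite C1; rwl A1; reflexivity).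
  assert (C2 : (wl⋆(t⋆t'))⋆(t1⋆t') = (t1⋆t')⋆(wl⋆(t⋆t'))).
  { apply (comm_loc HSli Iq); unfold idem.
    - nrm. rwl Hw3. rwl Hw1. reflexivity.
    - exact Iq1.
    - nrm. rwl Hw3. reflexivity.
    - nrm. rwl Ht1. reflexivity.
    - nrm. rwl B2. reflexivity.
    - nrm. rwl Ht2. reflexivity. }
  nrmH C2.
  assert (C2' : wl⋆t1⋆t' = t1⋆t'⋆wl⋆t⋆t') by (rewrite <- C2; rwl B2; reflexivity).
  unfold idem in Iz1, Iq1. nrmH Iz1. nrmH Iq1.
  assert (W1 : wl⋆s'⋆s1⋆wl = wl⋆s'⋆s1) by (rwr C1'; rwl Hw2; rwl Hw1; reflexivity).
  assert (W2 : wl⋆t1⋆t'⋆wl = t1⋆t'⋆wl) by (rwl C2'; rwl Hw3; rwl Hw1; reflexivity).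
  assert (X1 : s'⋆s1⋆wl⋆s'⋆s1 = s'⋆s1⋆wl).
  { transitivity (s'⋆s1⋆(s'⋆s⋆wl⋆s'⋆s1)). nrm. rwl A1. reflexivity.
    rewrite C1'. nrm. rwl Iz1. reflexivity. }
  assert (X2 : t1⋆t'⋆wl⋆t1⋆t' = wl⋆t1⋆t').
  { transitivity ((t1⋆t'⋆wl⋆t⋆t')⋆(t1⋆t')). nrm. rwl B2. reflexivity.
    rewrite <- C2'. nrm. rwl Iq1. reflexivity. }
  assert (C3 : (t1⋆t'⋆wl)⋆(wl⋆s'⋆s1) = (wl⋆s'⋆s1)⋆(t1⋆t'⋆wl)).
  { apply (comm_loc HSli (e := wl)); unfold idem.
    - exact Hw1.
    - nrm. rwl W2. rwl Iq1. reflexivity.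
    - nrm. rwl W1. rwl Iz1. reflexivity.
    - nrm. rwl W2. reflexivity.
    - nrm. rwl Hw1. reflexivity.
    - nrm. rwl Hw1. reflexivity.
    - nrm. rwl W1. reflexivity. }
  nrmH C3.
  assert (C3' : t1⋆t'⋆wl⋆s'⋆s1 = wl⋆s'⋆s1⋆t1⋆t'⋆wl) by (rewrite <- C3; rwl Hw1; reflexivity).
  assert (Hc : sw S (s'⋆s1) (t1⋆t') (t1⋆t'⋆wl⋆s'⋆s1)).
  { unfold sw, idem. split; [|split; [|split]].
    - nrm. rwr C3'. rwl Iq1. rwl Iz1. reflexivity.
    - nrm. rwl Iz1. reflexivity.
    - nrm. rwl Iq1. reflexivity.
    - nrm. rwl C3'. rwl X1. rwl W2. rwl X2.
      transitivity (s'⋆s1⋆(s'⋆s⋆wl⋆t⋆t')⋆(t1⋆t')).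
      + nrm. rwl A1. rwl B2. reflexivity.
      + rewrite Hw4. nrm. rwl A1. rwl B2. reflexivity. }
  assert (Hvs : sw S (s'⋆s1) (t1⋆t') vl).
  { unfold sw, idem. split; [|split; [|split]].
    - exact Hv1.
    - rewrite <- Hv2 at 1. nrm. rwl A3. exact Hv2.
    - rewrite <- Hv3 at 1. nrm. rwl B3. exact Hv3.
    - transitivity (s'⋆s1⋆(s1s⋆s1⋆vl⋆t1⋆t1s)⋆(t1⋆t')).
      + nrm. rwl Hs11. rwl Ht11. reflexivity.
      + rewrite Hv4. nrm. rwl Hs11. rwl Ht11. reflexivity. }
  assert (Iz1' : idem (s'⋆s1)) by (unfold idem; nrm; exact Iz1).
  assert (Iq1' : idem (t1⋆t')) by (unfold idem; nrm; exact Iq1).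
  rewrite (sw_unique HSli Iz1' Iq1' Hvs Hc).
  apply nat_le_idem.
  - exact (proj1 Hc).
  - nrm. rwl W2. reflexivity.
  - nrm. rwl W1. reflexivity.
Qed.
End Key.

Theorem lemma5p4 (S T : semigroup) (phi : S -> T) (Tinv : T -> T)
  (HSli : locally_inverse S) (HSes : E_solid S)
  (Hhom : homomorphism phi) (Hsurj : surjective phi)
  (HTinv : inverse_semigroup T) (HTinvx : forall x : T, inverse_of x (Tinv x))
  (Hcs : forall e : T, idem e -> completely_simple_on (fun s : S => phi s = e))
  (a b : arrow S T) (Ha : is_arrow phi Tinv a) (Hb : is_arrow phi Tinv b)
  (Hab : tgt a = src b) :
  forall ah bh : arrow S T,
    is_hat phi Tinv ah a -> is_hat phi Tinv bh b ->
    (* (1) hat (hat a) = hat a *)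
    (is_hat phi Tinv ah ah /\ forall x, is_hat phi Tinv x ah -> x = ah) /\
    (* (2) hat (a o b) = hat a o hat b *)
    (is_hat phi Tinv (comp ah bh) (comp a b) /\
     forall x, is_hat phi Tinv x (comp a b) -> x = comp ah bh) /\
    (* (3) hat (b ⋏ a) = (hat b ⋏ hat a) *)
    (forall w v, is_wedge phi Tinv w b a -> is_wedge phi Tinv v bh ah ->
       is_hat phi Tinv v w /\ forall wh, is_hat phi Tinv wh w -> wh = v).
Proof.
  intros ah bh Hah Hbh.
  pose proof (proj1 HSli) as Hreg.
  pose proof (@hat_unique S T phi Tinv HSli Hhom Hcs) as HU.
  destruct a as [al s be], b as [be' t ga]. simpl in Hab. subst be'.
  destruct ah as [al1 s1 be1], bh as [be2 t1 ga1].
  destruct Hah as [Aah [Sah [E1 [E2 Le1]]]]. destruct Hbh as [Abh [Sbh [E3 [E4 Le2]]]].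
  simpl in E1, E2, E3, E4, Le1, Le2. subst al1 be1 be2 ga1.
  pose proof Aah as Aah0. pose proof Abh as Abh0.
  destruct Aah as [Aah1 Aah2]. destruct Abh as [Abh1 Abh2].
  unfold stable in Sah, Sbh. simpl in Aah1, Aah2, Abh1, Abh2, Sah, Sbh.
  split; [|split].
  - assert (Hhh : is_hat phi Tinv (Arr al s1 be) (Arr al s1 be)).
    { split; [exact Aah0|split; [exact Sah|]].
      split; [reflexivity|split; [reflexivity|apply nat_le_refl; exact Hreg]]. }
    split; [exact Hhh|intros x Hx; exact (HU _ _ _ Hx Hhh)].
  - assert (Hc : is_hat phi Tinv (comp (Arr al s1 be) (Arr be t1 ga)) (comp (Arr al s be) (Arr be t ga))).
    { unfold is_hat, is_arrow, stable, arr_le, comp; simpl.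
      split; [split|split; [|split; [reflexivity|split; [reflexivity|]]]].
      - rewrite Hhom, opA, Aah1. exact Abh1.
      - rewrite Hhom, T_invmul, opA, Abh2 by assumption. exact Aah2.
      - rewrite Hhom, Sah, <- opA, Abh1. reflexivity.
      - apply compat; assumption. }
    split; [exact Hc|intros x Hx; exact (HU _ _ _ Hx Hc)].
  - intros w v Hw Hv.
    assert (Hvw : is_hat phi Tinv v w).
    { destruct Hw as [a' [b' [Ha' [Hb' [Ia [Ib Hsw]]]]]].
      destruct Hv as [ah' [bh' [Hah' [Hbh' [Iah [Ibh Hsv]]]]]].
      destruct a' as [a'1 s' a'2], b' as [b'1 t' b'2], ah' as [c1 s1s c2], bh' as [d1 t1s d2].
      destruct Ia as [_ [_ Is]], Ib as [_ [_ It]], Iah as [_ [_ Is1]], Ibh as [_ [_ It1]].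
      simpl in Is, It, Is1, It1.
      destruct w as [w1 wl w2], v as [v1 vl v2].
      destruct Hsw as [[Aw [Sw Tw]] [Iw [He [Hf Hs]]]].
      destruct Hsv as [[Av [Sv Tv]] [Iv [Hev [Hfv Hsv']]]].
      simpl in Sw, Tw, Sv, Tv. subst w1 w2 v1 v2.
      apply (f_equal (@lab S T)) in Iw. apply (f_equal (@lab S T)) in He.
      apply (f_equal (@lab S T)) in Hf. apply (f_equal (@lab S T)) in Hs.
      apply (f_equal (@lab S T)) in Iv. apply (f_equal (@lab S T)) in Hev.
      apply (f_equal (@lab S T)) in Hfv. apply (f_equal (@lab S T)) in Hsv'.
      simpl in Iw, He, Hf, Hs, Iv, Hev, Hfv, Hsv'.
      pose proof (key HSli Is It Is1 It1 Le1 Le2 Iw He Hf Hs Iv Hev Hfv Hsv') as Hle.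
      split; [exact Av|split; [|split; [reflexivity|split; [reflexivity|exact Hle]]]].
      unfold stable; simpl.
      assert (E : op (Tinv (phi s1)) (phi s1) = op (Tinv be) be).
      { pose proof Aah1 as A. rewrite Sah in A |- *.
        rewrite (T_invmul Tinv HTinv HTinvx), (T_invinv Tinv HTinv HTinvx).
        nrm. nrmH A. rwl A. reflexivity. }
      assert (F : op (phi t1) (Tinv (phi t1)) = op (Tinv be) be).
      { pose proof Abh2 as A. rewrite Sbh in A |- *.
        rewrite (T_invmul Tinv HTinv HTinvx), (T_invinv Tinv HTinv HTinvx) in A |- *.
        nrm. nrmH A. rwl A. reflexivity. }
      pose proof (hom_inv Tinv Hhom HTinv HTinvx Is1) as P1.
      pose proof (hom_inv Tinv Hhom HTinv HTinvx It1) as P2.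
      apply (f_equal phi) in Hev. apply (f_equal phi) in Hfv. apply (f_equal phi) in Hsv'.
      rewrite !Hhom, P1, E in Hev. rewrite !Hhom, P2, F in Hfv.
      rewrite !Hhom, P1, P2, E, F in Hsv'.
      transitivity (op (op (op (Tinv be) be) (phi vl)) (op (Tinv be) be)).
      - rewrite Hfv, Hev. reflexivity.
      - rewrite Hsv'. apply (T_idem1 Tinv HTinvx). }
    split; [exact Hvw|intros wh Hwh; exact (HU _ _ _ Hwh Hvw)].
Qed.
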